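(* In the uncensored delayed-feedback bandit model (see context), let $a^*\in\{1,\dots,K\}$ satisfy $\theta_{a^*}\ge\theta_k$ for all $k$, and for any policy let $L(T)=\mathbb{E}[r^*(T)-r(T)]$. Then \[ L(T)=\sum_{s=1}^T\mathbb{E}[\theta_{a^*}-\theta_{A_s}]\,\tau_{T-s}, \] where $\tau_{T-s}=\mathbb{P}(D_s\le T-s)$. Moreover, with $N_k(T)=\sum_{s=1}^T\mathbf{1}\{A_s=k\}$, \[ L(T)\le\sum_{k=1}^K(\theta_{a^*}-\theta_k)\mathbb{E}[N_k(T)], \] and if $\mu=\mathbb{E}[D_s]<\infty$, \[ \sum_{k=1}^K(\theta_{a^*}-\theta_k)\mathbb{E}[N_k(T)]-L(T)\le\mu\sum_{k=1}^K(\theta_{a^*}-\theta_k). \]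
   Context: Uncensored delayed-feedback bandit model: $K$ arms with conversion rates $\theta_1,\dots,\theta_K\in[0,1]$; a delay distribution on $\mathbb{N}=\{0,1,\dots\}$ with CDF $\tau_d=\mathbb{P}(D\le d)$. At each round $t=1,2,\dots$ the learner picks $A_t\in\{1,\dots,K\}$ as a function of past observations; this triggers $C_t\in\{0,1\}$ and $D_t\in\mathbb{N}$, conditionally independent given the past, with $C_t\sim\mathrm{Bernoulli}(\theta_{A_t})$ and $D_t$ with CDF $\tau$. With $X_{s,t}=C_s\mathbf{1}\{D_s\le t-s\}$, at round $t$ the learner observes all $X_{s,t}$, $1\le s\le t$, and receives reward $Y_t=\sum_{s=1}^tC_s\mathbf{1}\{D_s=t-s\}$. $r(T)=\sum_{t=1}^TY_t$ is the learner's cumulated reward and $r^*(T)$ the cumulated reward of an oracle playing $A_t=a^*$ at every round. *)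

(* Defs.v *)
From HB Require Import structures.
From mathcomp Require Import all_boot all_order all_algebra.
From mathcomp Require Import all_classical all_reals all_analysis.
Set Implicit Arguments. Unset Strict Implicit. Unset Printing Implicit Defensive.
Import Order.TTheory GRing.Theory Num.Theory.
Local Open Scope classical_set_scope.
Local Open Scope ring_scope.

(* Rounds are t = 1, 2, ...; arms are 'I_K; conversions C t : bool; delays D t : nat. *)

Definition bern {R : realType} (q : R) (c : bool) : R := if c then q else 1 - q.

(* delay distribution given by its pmf p on nat; tau d = P(D <= d) *)
Definition is_pmf {R : realType} (p : nat -> R) : Prop :=
  (forall n, 0 <= p n) /\ (\sum_(0 <= n <oo) (p n)%:E = 1)%E.
Definition cdf_of {R : realType} (p : nat -> R) (d : nat) : R := \sum_(i < d.+1) p i.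
Definition mean_of {R : realType} (p : nat -> R) : \bar R :=
  (\sum_(0 <= n <oo) (n%:R * p n)%:E)%E.

Section Model.
Context {d : measure_display} {Omega : measurableType d} {K : nat}.
Variables (A : nat -> Omega -> 'I_K) (C : nat -> Omega -> bool) (D : nat -> Omega -> nat).

Definition Xobs (s t : nat) (w : Omega) : bool := C s w && (D s w <= t - s)%N.

Definition hist (t : nat) (w : Omega) : nat -> nat -> bool :=
  fun s u => [&& (1 <= s)%N, (s <= u)%N, (u < t)%N & Xobs s u w].

Definition Yrew {R : realType} (t : nat) (w : Omega) : R :=
  \sum_(1 <= s < t.+1) (C s w && (D s w == t - s)%N)%:R.

Definition cumrew {R : realType} (T : nat) (w : Omega) : R :=
  \sum_(1 <= t < T.+1) Yrew t w.

Definition Npulls {R : realType} (k : 'I_K) (T : nat) (w : Omega) : R :=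
  \sum_(1 <= s < T.+1) (A s w == k)%:R.

Definition is_policy : Prop :=
  exists pi : nat -> (nat -> nat -> bool) -> 'I_K,
    forall t w, (1 <= t)%N -> A t w = pi t (hist t w).

(* the atom of the past before the draw of (C_t, D_t):
   (A_s, C_s, D_s)_{s < t} and A_t take prescribed values *)
Definition past (t : nat) (a : nat -> 'I_K) (c : nat -> bool) (dd : nat -> nat) :
  set Omega :=
  [set w | (forall s, (1 <= s < t)%N -> [/\ A s w = a s, C s w = c s & D s w = dd s])
           /\ A t w = a t].

(* the delayed-feedback bandit model: given the whole past (and A_t), C_t and
   D_t are conditionally independent, C_t ~ Bernoulli(theta_{A_t}), D_t ~ p *)
Definition delayed_bandit {R : realType} (P : probability Omega R)
  (theta : 'I_K -> R) (p : nat -> R) : Prop :=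
  [/\ (forall t k, measurable (A t @^-1` [set k])),
      (forall t b, measurable (C t @^-1` [set b])),
      (forall t n, measurable (D t @^-1` [set n])) &
      (forall t a c dd (ct : bool) (dt : nat), (1 <= t)%N ->
         P (past t a c dd `&` [set w | C t w = ct /\ D t w = dt])
         = (P (past t a c dd) * (bern (theta (a t)) ct * p dt)%:E)%E)].
End Model.

(* Main.v *)
Require Import Defs.
From HB Require Import structures.
From mathcomp Require Import all_boot all_order all_algebra.
From mathcomp Require Import all_classical all_reals all_analysis.
From mathcomp Require Import zify measurable_realfun ring lra.
Import Order.TTheory GRing.Theory Num.Theory.
Local Open Scope classical_set_scope.
Local Open Scope ring_scope.



Lemma good_bigcup_nat (R : realType) (d : measure_display) (Omega : measurableType d)
  (P : probability Omega R) (B : set Omega) (y : R) (F : nat -> set Omega) :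
  measurable B -> (forall n, measurable (F n)) -> trivIset setT F ->
  (forall n, P (F n `&` B) = (P (F n) * y%:E)%E) ->
  P (\bigcup_n F n `&` B) = (P (\bigcup_n F n) * y%:E)%E.
Proof.
move=> mB mF tF hF.
rewrite setI_bigcupl measure_semi_bigcup; last 3 first.
- by move=> n; apply: measurableI.
- exact: trivIset_setIr.
- by apply: bigcup_measurable => n _; apply: measurableI.
rewrite measure_semi_bigcup //; last by apply: bigcup_measurable.
rewrite muleC -nneseriesZl //.
by apply: eq_eseriesr => n _; rewrite muleC; apply: hF.
Qed.

Lemma good_bigcup_count (R : realType) (d : measure_display) (Omega : measurableType d)
  (P : probability Omega R) (B : set Omega) (y : R) (I : countType) (F : I -> set Omega) :
  measurable B -> (forall i, measurable (F i)) -> trivIset setT F ->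
  (forall i, P (F i `&` B) = (P (F i) * y%:E)%E) ->
  P (\bigcup_i F i `&` B) = (P (\bigcup_i F i) * y%:E)%E.
Proof.
move=> mB mF tF hF.
pose G n := if pickle_inv n is Some i then F i else set0.
have -> : \bigcup_i F i = \bigcup_n G n.
  rewrite eqEsubset; split => w [x _ Hx].
    by exists (pickle x) => //; rewrite /G pickleK_inv.
  by move: Hx; rewrite /G; case: (pickle_inv x) => // i Hi; exists i.
apply: good_bigcup_nat => //.
- by move=> n; rewrite /G; case: (pickle_inv n).
- move=> n m _ _; rewrite /G.
  case En: (pickle_inv n) => [i|]; last by rewrite set0I => -[].
  idtac.
  case Em: (pickle_inv m) => [j|]; last by rewrite setI0 => -[].
  move=> Hij; have eij := tF i j Logic.I Logic.I Hij.
  by rewrite -(@pickle_invK I n) -(@pickle_invK I m) En Em eij.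
- move=> n; rewrite /G; case: (pickle_inv n) => [i|]; first exact: hF.
  by rewrite set0I !measure0 mul0e.
Qed.



Definition Qm {d : measure_display} {Omega : measurableType d} {K : nat}
  (A : nat -> Omega -> 'I_K) (C : nat -> Omega -> bool) (D : nat -> Omega -> nat)
  (m t : nat) (a : nat -> 'I_K) (c : nat -> bool) (dd : nat -> nat) : set Omega :=
  [set w | (forall s, (m < s < t)%N -> [/\ A s w = a s, C s w = c s & D s w = dd s])
           /\ A t w = a t].

Definition upd {T : Type} (m : nat) (f : nat -> T) (v : T) : nat -> T :=
  fun s => if s == m then v else f s.

Lemma Qm_measurable {d : measure_display} {Omega : measurableType d} {K : nat}
  (A : nat -> Omega -> 'I_K) (C : nat -> Omega -> bool) (D : nat -> Omega -> nat) :
  (forall t k, measurable (A t @^-1` [set k])) ->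
  (forall t b, measurable (C t @^-1` [set b])) ->
  (forall t n, measurable (D t @^-1` [set n])) ->
  forall m t a c dd, measurable (Qm A C D m t a c dd).
Proof.
move=> mA mC mD m t a c dd.
pose F s := if (m < s < t)%N then
   A s @^-1` [set a s] `&` (C s @^-1` [set c s] `&` D s @^-1` [set dd s]) else setT.
have -> : Qm A C D m t a c dd = \bigcap_s F s `&` A t @^-1` [set a t].
  rewrite eqEsubset; split => w.
    case=> H1 H2; split => // s _; rewrite /F; case: ifP => // hs.
    by case: (H1 s hs) => e1 e2 e3.
  case=> H1 H2; split => // s hs.
  by have := H1 s Logic.I; rewrite /F hs => -[e1 [e2 e3]].
apply: measurableI; last exact: mA.
apply: bigcapT_measurable => s; rewrite /F; case: ifP => _ //.
by apply: measurableI => //; apply: measurableI.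
Qed.

Lemma Qm_good {R : realType} {d : measure_display} {Omega : measurableType d} {K : nat}
  (A : nat -> Omega -> 'I_K) (C : nat -> Omega -> bool) (D : nat -> Omega -> nat)
  (P : probability Omega R) (theta : 'I_K -> R) (p : nat -> R) :
  delayed_bandit A C D P theta p ->
  forall t (ct : bool) (dt : nat), (1 <= t)%N ->
  forall m a c dd,
  P (Qm A C D m t a c dd `&` [set w | C t w = ct /\ D t w = dt])
  = (P (Qm A C D m t a c dd) * (bern (theta (a t)) ct * p dt)%:E)%E.
Proof.
case=> mA mC mD hP t ct dt t1.
have mB : measurable [set w | C t w = ct /\ D t w = dt].
  have -> : [set w | C t w = ct /\ D t w = dt] = C t @^-1` [set ct] `&` D t @^-1` [set dt] by [].
  exact: measurableI.
elim=> [|m IH] a c dd; first exact: hP.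
have [lt|ge] := ltnP m.+1 t; last first.
  have -> : Qm A C D m.+1 t a c dd = Qm A C D m t a c dd.
    rewrite /Qm eqEsubset; split => w [H1 H2]; split => // s /andP[hs1 hs2].
      by exfalso; lia.
    by exfalso; lia.
  exact: IH.
pose G (x : 'I_K * bool * nat) :=
  Qm A C D m t (upd m.+1 a x.1.1) (upd m.+1 c x.1.2) (upd m.+1 dd x.2).
have at_eq : forall x : 'I_K * bool * nat, upd m.+1 a x.1.1 t = a t.
  by move=> x; rewrite /upd (gtn_eqF lt).
have -> : Qm A C D m.+1 t a c dd = \bigcup_x G x.
  rewrite eqEsubset; split => w.
    case=> H1 H2; exists (A m.+1 w, C m.+1 w, D m.+1 w) => //.
    rewrite /G /=; split; last by rewrite /upd (gtn_eqF lt).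
    move=> s /andP[hs1 hs2]; rewrite /upd; case: eqP => [->//|ne].
    by apply: H1; apply/andP; split => //; lia.
  case=> x _ [H1 H2]; split; last by rewrite H2 /upd (gtn_eqF lt).
  move=> s /andP[hs1 hs2].
  have := H1 s; rewrite (ltn_trans (ltnSn m) hs1) hs2 => /(_ isT).
  by rewrite /upd (gtn_eqF hs1).
apply: good_bigcup_count => //.
- by move=> x; apply: Qm_measurable.
- move=> x y _ _ [w [[Hx1 _] [Hy1 _]]].
  have := Hx1 m.+1; have := Hy1 m.+1; rewrite ltnSn lt /= => /(_ isT) + /(_ isT).
  rewrite /upd eqxx => -[e1 e2 e3] [f1 f2 f3].
  move: e1 e2 e3 f1 f2 f3; clear; case: x => [[x1 x2] x3]; case: y => [[y1 y2] y3] /= <- <- <- <- <- <-.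
  by [].
- by move=> x; rewrite /G IH at_eq.
Qed.



Lemma E_sum {R : realType} {d : measure_display} {Omega : measurableType d}
  (P : probability Omega R) (I : Type) (r : seq I) (f : I -> Omega -> R) :
  (forall i, measurable_fun setT (f i)) -> (forall i w, 0 <= f i w) ->
  ('E_P[fun w => (\sum_(i <- r) f i w)%R] = \sum_(i <- r) 'E_P[f i])%E.
Proof.
move=> mf f0; rewrite unlock.
under eq_integral do rewrite -sumEFin.
apply: ge0_integral_sum => //.
- by move=> i; apply/measurable_EFinP; exact: mf.
- by move=> i w _; rewrite lee_fin.
Qed.

Lemma E_indicZ {R : realType} {d : measure_display} {Omega : measurableType d}
  (P : probability Omega R) (c : R) (S : set Omega) :
  0 <= c -> measurable S ->
  ('E_P[fun w => (c * \1_S w)%R] = (c * fine (P S))%:E)%E.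
Proof.
move=> c0 mS; rewrite unlock.
rewrite (integralZl_indic _ (fun _ => S)) //; last by move=> h; exfalso; move: c0; rewrite leNgt h.
rewrite integral_indic // setIT.
by rewrite EFinM fineK ?fin_num_measure.
Qed.



Lemma indepA {R : realType} {d : measure_display} {Omega : measurableType d} {K : nat}
  (A : nat -> Omega -> 'I_K) (C : nat -> Omega -> bool) (D : nat -> Omega -> nat)
  (P : probability Omega R) (theta : 'I_K -> R) (p : nat -> R) :
  delayed_bandit A C D P theta p ->
  forall t k (ct : bool) (dt : nat), (1 <= t)%N ->
  P (A t @^-1` [set k] `&` [set w | C t w = ct /\ D t w = dt])
  = (P (A t @^-1` [set k]) * (bern (theta k) ct * p dt)%:E)%E.
Proof.
move=> hB t k ct dt t1.
have := @Qm_good _ _ _ _ A C D P theta p hB t ct dt t1 t.-1 (fun _ => k) (fun _ => false) (fun _ => 0%N).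
have -> : Qm A C D t.-1 t (fun _ => k) (fun _ => false) (fun _ => 0%N) = A t @^-1` [set k].
  rewrite eqEsubset; split => w; first by case.
  by move=> h; split => // s hs; exfalso; lia.
by [].
Qed.

Definition qq {R : realType} {d : measure_display} {Omega : measurableType d} {K : nat}
  (P : probability Omega R) (A : nat -> Omega -> 'I_K) (s : nat) (k : 'I_K) : R :=
  fine (P (A s @^-1` [set k])).

Lemma mA_of {R : realType} {d : measure_display} {Omega : measurableType d} {K : nat}
  (A : nat -> Omega -> 'I_K) (C : nat -> Omega -> bool) (D : nat -> Omega -> nat)
  (P : probability Omega R) (theta : 'I_K -> R) (p : nat -> R) :
  delayed_bandit A C D P theta p -> forall t k, measurable (A t @^-1` [set k]).
Proof. by case. Qed.

Lemma mS_of {R : realType} {d : measure_display} {Omega : measurableType d} {K : nat}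
  (A : nat -> Omega -> 'I_K) (C : nat -> Omega -> bool) (D : nat -> Omega -> nat)
  (P : probability Omega R) (theta : 'I_K -> R) (p : nat -> R) :
  delayed_bandit A C D P theta p -> forall s k ct dt,
  measurable (A s @^-1` [set k] `&` [set w | C s w = ct /\ D s w = dt]).
Proof.
case=> mA mC mD _ s k ct dt; apply: measurableI => //.
have -> : [set w | C s w = ct /\ D s w = dt] = C s @^-1` [set ct] `&` D s @^-1` [set dt] by [].
exact: measurableI.
Qed.

Lemma indic_ge0 {R : realType} {T : Type} (S : set T) w : (0 : R) <= \1_S w.
Proof. by rewrite indicE ler0n. Qed.

Lemma m_cindic {R : realType} {d : measure_display} {Omega : measurableType d}
  (c : R) (S : set Omega) : measurable S -> measurable_fun setT (fun w => c * \1_S w).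
Proof.
move=> mS; apply: measurable_funM => //; exact: measurable_indic.
Qed.

Lemma qq_sum {R : realType} {d : measure_display} {Omega : measurableType d} {K : nat}
  (A : nat -> Omega -> 'I_K) (C : nat -> Omega -> bool) (D : nat -> Omega -> nat)
  (P : probability Omega R) (theta : 'I_K -> R) (p : nat -> R) :
  delayed_bandit A C D P theta p -> forall s, \sum_(k < K) qq P A s k = 1.
Proof.
move=> hB s.
have : ('E_P[fun w => (\sum_(k < K) 1 * \1_(A s @^-1` [set k]) w)%R] =
        \sum_(k < K) 'E_P[fun w => (1 * \1_(A s @^-1` [set k]) w)%R])%E.
  apply: E_sum => k; [apply: m_cindic; exact: mA_of hB s k | move=> w; rewrite mul1r; exact: indic_ge0].
have -> : (fun w => (\sum_(k < K) 1 * \1_(A s @^-1` [set k]) w)%R) = cst (1:R).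
  apply: funext => w /=; rewrite (bigD1 (A s w)) //= big1 ?addr0 ?mul1r ?indicE ?mem_set //.
  by move=> k /negbTE hk; rewrite indicE mul1r memNset //= => e; rewrite e eqxx in hk.
rewrite expectation_cst.
have -> : (\sum_(k < K) 'E_P[fun w => (1 * \1_(A s @^-1` [set k]) w)%R] = \sum_(k < K) (qq P A s k)%:E)%E.
  apply: eq_bigr => k _; rewrite E_indicZ ?mul1r //; exact: mA_of hB s k.
move=> h; apply: EFin_inj; rewrite h; rewrite -sumEFin; done.
Qed.



Lemma E_sum_ind {R : realType} {d : measure_display} {Omega : measurableType d}
  (P : probability Omega R) (I : Type) (r : seq I) (c : I -> R) (S : I -> set Omega) :
  (forall i, 0 <= c i) -> (forall i, measurable (S i)) ->
  ('E_P[fun w => (\sum_(i <- r) c i * \1_(S i) w)%R] =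
   (\sum_(i <- r) c i * fine (P (S i)))%:E)%E.
Proof.
move=> c0 mS; rewrite E_sum; last 2 first.
- by move=> i; apply: m_cindic.
- by move=> i w; apply: mulr_ge0 => //; exact: indic_ge0.
rewrite -sumEFin; apply: eq_bigr => i _.
by rewrite (E_indicZ P (c i) (S i)) //.
Qed.

Lemma m_sum_ind {R : realType} {d : measure_display} {Omega : measurableType d}
  (I : Type) (r : seq I) (c : I -> R) (S : I -> set Omega) :
  (forall i, measurable (S i)) ->
  measurable_fun setT (fun w => \sum_(i <- r) c i * \1_(S i) w).
Proof. by move=> mS; apply: measurable_sum => i; apply: m_cindic. Qed.

Lemma ge0_sum_ind {R : realType} {Omega : Type}
  (I : Type) (r : seq I) (c : I -> R) (S : I -> set Omega) w :
  (forall i, 0 <= c i) -> 0 <= \sum_(i <- r) c i * \1_(S i) w.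
Proof. by move=> c0; apply: sumr_ge0 => i _; apply: mulr_ge0 => //; exact: indic_ge0. Qed.

Lemma E_gap {R : realType} {d : measure_display} {Omega : measurableType d} {K : nat}
  (A : nat -> Omega -> 'I_K) (C : nat -> Omega -> bool) (D : nat -> Omega -> nat)
  (P : probability Omega R) (theta : 'I_K -> R) (p : nat -> R) (astar : 'I_K) s :
  delayed_bandit A C D P theta p -> (forall k, theta k <= theta astar) ->
  ('E_P[fun w => (theta astar - theta (A s w))%R] =
   (\sum_(k < K) (theta astar - theta k) * qq P A s k)%:E)%E.
Proof.
move=> hB ht.
have -> : (fun w => (theta astar - theta (A s w))%R) =
   (fun w => \sum_(k < K) (theta astar - theta k) * \1_(A s @^-1` [set k]) w).
  apply: funext => w; rewrite (bigD1 (A s w)) //= big1 ?addr0.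
    by rewrite indicE mem_set ?mulr1.
  by move=> k /negbTE hk; rewrite indicE memNset ?mulr0 //= => e; rewrite e eqxx in hk.
rewrite E_sum_ind //.
- by move=> k; rewrite subr_ge0.
- by move=> k; exact: mA_of hB s k.
Qed.

Lemma E_N {R : realType} {d : measure_display} {Omega : measurableType d} {K : nat}
  (A : nat -> Omega -> 'I_K) (C : nat -> Omega -> bool) (D : nat -> Omega -> nat)
  (P : probability Omega R) (theta : 'I_K -> R) (p : nat -> R) k T :
  delayed_bandit A C D P theta p ->
  ('E_P[Npulls A k T] = (\sum_(1 <= s < T.+1) qq P A s k)%:E)%E.
Proof.
move=> hB.
have -> : Npulls (R:=R) A k T = (fun w => \sum_(1 <= s < T.+1) 1 * \1_(A s @^-1` [set k]) w).
  apply: funext => w; rewrite /Npulls; apply: eq_bigr => s _.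
  rewrite mul1r indicE; congr (_ %:R).
  by case: eqP => e; [rewrite mem_set | rewrite memNset].
rewrite E_sum_ind //.
- by congr (_%:E); apply: eq_bigr => s _; rewrite mul1r.
- by move=> s; exact: mA_of hB s k.
Qed.

Lemma E_cum {R : realType} {d : measure_display} {Omega : measurableType d} {K : nat}
  (A : nat -> Omega -> 'I_K) (C : nat -> Omega -> bool) (D : nat -> Omega -> nat)
  (P : probability Omega R) (theta : 'I_K -> R) (p : nat -> R) T :
  delayed_bandit A C D P theta p ->
  ('E_P[cumrew C D T] = (\sum_(1 <= t < T.+1) \sum_(1 <= s < t.+1) \sum_(k < K)
        qq P A s k * (theta k * p (t - s)%N))%:E)%E.
Proof.
move=> hB.
pose S s j k := A s @^-1` [set k] `&` [set w | C s w = true /\ D s w = j].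
have mS : forall s j k, measurable (S s j k) by move=> *; exact: mS_of hB _ _ _ _.
have -> : cumrew (R:=R) C D T = (fun w => \sum_(1 <= t < T.+1) \sum_(1 <= s < t.+1)
     \sum_(k < K) 1 * \1_(S s (t - s)%N k) w).
  apply: funext => w; rewrite /cumrew; apply: eq_bigr => t _; rewrite /Yrew.
  apply: eq_bigr => s _.
  rewrite (bigD1 (A s w)) //= big1 ?addr0.
    rewrite mul1r indicE.
    have -> : (C s w && (D s w == (t - s)%N)) = (w \in S s (t - s)%N (A s w)); last by [].
    apply/andP/idP.
      by case=> c /eqP e; rewrite mem_set.
    by move/set_mem => -[_ [c e]]; rewrite c e eqxx.
  by move=> k /negbTE hk; rewrite indicE memNset ?mulr0 //= => -[e _]; rewrite e eqxx in hk.
rewrite E_sum; last 2 first.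
- by move=> t; apply: measurable_sum => s; apply: m_sum_ind.
- by move=> t w; apply: sumr_ge0 => s _; apply: ge0_sum_ind.
rewrite -sumEFin; apply: eq_bigr => t _.
rewrite E_sum; last 2 first.
- by move=> s; apply: m_sum_ind.
- by move=> s w; apply: ge0_sum_ind.
rewrite -sumEFin; apply: eq_big_nat => s /andP[s1 _].
rewrite E_sum_ind //; congr (_%:E); apply: eq_bigr => k _.
rewrite mul1r /S (indepA _ _ _ _ _ _ hB) // fineM ?fin_num_measure //.
exact: mA_of hB s k.
Qed.



Lemma cdfoS {R : realType} (p : nat -> R) n : cdf_of p n.+1 = cdf_of p n + p n.+1.
Proof. by rewrite /cdf_of big_ord_recr. Qed.

Lemma cdfo_ge0 {R : realType} (p : nat -> R) n : (forall n, 0 <= p n) -> 0 <= cdf_of p n.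
Proof. by move=> hp; apply: sumr_ge0 => i _. Qed.

Lemma cdfo_mono {R : realType} (p : nat -> R) n m : (forall n, 0 <= p n) ->
  (n <= m)%N -> cdf_of p n <= cdf_of p m.
Proof.
move=> hp /subnK <-; elim: (m - n)%N => [|k IH] //.
by rewrite addSn cdfoS (le_trans IH) // lerDl.
Qed.

Lemma psum_le_series {R : realType} (u : nat -> R) n : (forall n, 0 <= u n) ->
  ((\sum_(i < n) u i)%:E <= \sum_(0 <= i <oo) (u i)%:E)%E.
Proof.
move=> hu.
have := @nneseries_lim_ge R (fun i => (u i)%:E) xpredT 0%N n (fun i _ _ => (hu i)).
by rewrite sumEFin big_mkord.
Qed.

Lemma cdfo_le1 {R : realType} (p : nat -> R) n : is_pmf p -> cdf_of p n <= 1.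
Proof.
case=> hp h1; rewrite -lee_fin -h1 /cdf_of; exact: psum_le_series.
Qed.

Lemma cdf_near1 {R : realType} (p : nat -> R) e : is_pmf p -> 0 < e ->
  exists n, 1 - e < cdf_of p n.
Proof.
case=> hp h1 e0.
have := @ereal_nondecreasing_series R (fun i => (p i)%:E) xpredT 0%N (fun i _ _ => hp i).
move/ereal_nondecreasing_cvgn/cvg_lim => h.
have : ((1 - e)%:E < ereal_sup (range (fun n => \sum_(0 <= i < n | xpredT i) (p i)%:E)))%E.
  rewrite -h // h1 lte_fin; by rewrite ltrBlDr ltrDl.
move/ereal_sup_gt => [y [n _ <-]] hy.
exists n; rewrite -lte_fin (lt_le_trans hy) // sumEFin big_mkord lee_fin.
by rewrite /cdf_of big_ord_recr /= lerDl.
Qed.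

Lemma cdf_diff {R : realType} (p : nat -> R) j k :
  cdf_of p (j + k) - cdf_of p j = \sum_(i < (j + k).+1) (j < i)%N%:R * p i.
Proof.
elim: k => [|k IH].
  rewrite addn0 subrr big1 // => i _.
  by rewrite (_ : (j < i)%N = false) ?mul0r //; have := ltn_ord i; lia.
rewrite addnS cdfoS big_ord_recr /= -IH.
rewrite (_ : (j < (j + k).+1)%N = true) ?mul1r; last by lia.
by rewrite addrAC.
Qed.

Lemma sum_lt_min (R : realType) T i : (\sum_(j < T) ((j < i)%N)%:R : R) <= i%:R.
Proof.
have h : forall T, (\sum_(j < T) ((j < i)%N : nat))%N = minn T i.
  elim=> [|T0 IH]; first by rewrite big_ord0 min0n.
  rewrite big_ord_recr /= IH; case: (ltnP T0 i) => h; lia.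
rewrite -natr_sum h ler_nat; lia.
Qed.

Lemma tail_sum_le_mean {R : realType} (p : nat -> R) T :
  is_pmf p -> (mean_of p < +oo)%E ->
  \sum_(j < T) (1 - cdf_of p j) <= fine (mean_of p).
Proof.
move=> hpmf hm; have hp := hpmf.1.
have m0 : (0 <= mean_of p)%E.
  by apply: nneseries_ge0 => n _ _; rewrite lee_fin mulr_ge0.
have hfin : mean_of p = (fine (mean_of p))%:E.
  by rewrite fineK // ge0_fin_numE.
have hM : forall M, \sum_(i < M) i%:R * p i <= fine (mean_of p).
  move=> M; rewrite -lee_fin -hfin.
  by apply: psum_le_series => n; rewrite mulr_ge0.
apply/ler_addgt0Pr => e e0.
have eT0 : 0 < e / T.+1%:R by rewrite divr_gt0.
have [n hn] := cdf_near1 p (e / T.+1%:R) hpmf eT0.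
pose M := maxn n T.
have hMn : 1 - e / T.+1%:R < cdf_of p M.
  by rewrite (lt_le_trans hn) // cdfo_mono // leq_maxl.
have -> : \sum_(j < T) (1 - cdf_of p j) =
   \sum_(j < T) (cdf_of p M - cdf_of p j) + T%:R * (1 - cdf_of p M).
  have hc : \sum_(j < T) (1 - cdf_of p M) = T%:R * (1 - cdf_of p M).
    by rewrite sumr_const card_ord mulr_natl.
  rewrite -hc -big_split /=.
  by apply: eq_bigr => j _; lra.
have h1 : \sum_(j < T) (cdf_of p M - cdf_of p j) <= fine (mean_of p).
  have -> : \sum_(j < T) (cdf_of p M - cdf_of p j) =
     \sum_(j < T) \sum_(i < M.+1) (j < i)%N%:R * p i.
    apply: eq_bigr => j _.
    have hjM : (j <= M)%N by rewrite (leq_trans (ltnW (ltn_ord j))) // leq_maxr.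
    by rewrite -(subnKC hjM) cdf_diff.
  rewrite exchange_big /= (le_trans _ (hM M.+1)) //.
  apply: ler_sum => i _; rewrite -mulr_suml ler_wpM2r //.
  exact: sum_lt_min.
have h2 : T%:R * (1 - cdf_of p M) <= e.
  have -> : e = T.+1%:R * (e / T.+1%:R) by rewrite mulrC divfK // pnatr_eq0.
  apply: ler_pM.
  - by [].
  - by rewrite subr_ge0 cdfo_le1.
  - by rewrite ler_nat.
  - by rewrite lerBlDr addrC -lerBlDr ltW.
by rewrite lerD.
Qed.



Lemma exch_cdf {R : realType} (p : nat -> R) (f : nat -> R) T :
  \sum_(1 <= t < T.+1) \sum_(1 <= s < t.+1) f s * p (t - s)%N =
  \sum_(1 <= s < T.+1) f s * cdf_of p (T - s)%N.
Proof.
elim: T => [|T IH]; first by rewrite !big_geq.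
rewrite big_nat_recr //= IH.
rewrite !(big_nat_recr T.+1 1) //=.
have c0 : cdf_of p 0 = p 0 by rewrite /cdf_of big_ord1.
rewrite subnn c0 addrA; congr (_ + _).
rewrite -big_split /=; apply: eq_big_nat => s /andP[s1 sT].
have -> : (T.+1 - s)%N = (T - s).+1 by lia.
by rewrite cdfoS mulrDr.
Qed.

Lemma rev_sum {R : realType} (f : nat -> R) T :
  \sum_(1 <= s < T.+1) f (T - s)%N = \sum_(j < T) f j.
Proof.
elim: T => [|T IH]; first by rewrite big_geq // big_ord0.
rewrite big_nat_recl // big_ord_recr /= subn1 /= addrC; congr (_ + _).
rewrite -IH; apply: eq_big_nat => s _; congr (f _); lia.
Qed.



Lemma qq_ge0 {R : realType} {d : measure_display} {Omega : measurableType d} {K : nat}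
  (P : probability Omega R) (A : nat -> Omega -> 'I_K) s k : 0 <= qq P A s k.
Proof. by apply: fine_ge0. Qed.

Lemma qq_le1 {R : realType} {d : measure_display} {Omega : measurableType d} {K : nat}
  (A : nat -> Omega -> 'I_K) (C : nat -> Omega -> bool) (D : nat -> Omega -> nat)
  (P : probability Omega R) (theta : 'I_K -> R) (p : nat -> R) s k :
  delayed_bandit A C D P theta p -> qq P A s k <= 1.
Proof.
move=> hB; have mS := mA_of _ _ _ _ _ _ hB s k.
rewrite /qq -[1]/(fine (1%:E)); apply: fine_le; rewrite ?fin_num_measure //.
exact: probability_le1.
Qed.

Theorem lemma1 (R : realType) (K : nat) (theta : 'I_K -> R) (p : nat -> R)
  (astar : 'I_K)
  (* learner's process *)
  (d : measure_display) (Omega : measurableType d) (P : probability Omega R)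
  (A : nat -> Omega -> 'I_K) (C : nat -> Omega -> bool) (D : nat -> Omega -> nat)
  (* oracle's process (always plays astar) *)
  (d' : measure_display) (Omega' : measurableType d') (P' : probability Omega' R)
  (A' : nat -> Omega' -> 'I_K) (C' : nat -> Omega' -> bool) (D' : nat -> Omega' -> nat)
  (T : nat) :
  (forall k, 0 <= theta k <= 1) ->
  is_pmf p ->
  (forall k, theta k <= theta astar) ->
  is_policy A C D ->
  delayed_bandit A C D P theta p ->
  (forall t w, (1 <= t)%N -> A' t w = astar) ->
  delayed_bandit A' C' D' P' theta p ->
  let L := ('E_P'[cumrew C' D' T] - 'E_P[cumrew C D T])%E in
  let G := (\sum_(k < K) (theta astar - theta k)%:E * 'E_P[Npulls A k T])%E in
  [/\ L = (\sum_(1 <= s < T.+1)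
              'E_P[fun w => (theta astar - theta (A s w))%R] * (cdf_of p (T - s))%:E)%E,
      (L <= G)%E &
      ((mean_of p < +oo)%E ->
         (G - L <= mean_of p * (\sum_(k < K) (theta astar - theta k))%:E)%E)].
Proof.
move=> hth hpmf hstar _ hB hA' hB' L G.
have hp := hpmf.1.
pose q := qq P A. pose q' := qq P' A'.
pose e s := \sum_(k < K) (theta astar - theta k) * q s k.
have e0 : forall s, 0 <= e s.
  by move=> s; apply: sumr_ge0 => k _; rewrite mulr_ge0 ?subr_ge0 ?qq_ge0.
have q'E : forall s k, (1 <= s)%N -> q' s k = (k == astar)%:R.
  move=> s k s1; rewrite /q' /qq.
  case: eqP => [->|ne].
    have -> : A' s @^-1` [set astar] = setT.
      by rewrite eqEsubset; split => w //= _; rewrite /preimage /= hA'.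
    by rewrite probability_setT.
  have -> : A' s @^-1` [set k] = set0.
    rewrite eqEsubset; split => w //=; rewrite /preimage /= hA' // => e'.
    by apply: ne; rewrite e'.
  by rewrite measure0.
have hX' : forall s j, (1 <= s)%N ->
    \sum_(k < K) q' s k * (theta k * p j) = theta astar * p j.
  move=> s j s1; rewrite (bigD1 astar) //= big1 ?addr0 ?q'E ?eqxx ?mul1r //.
  by move=> k /negbTE hk; rewrite q'E // hk mul0r.
have hX : forall s j, theta astar * p j - \sum_(k < K) q s k * (theta k * p j) = e s * p j.
  move=> s j.
  have -> : theta astar * p j = \sum_(k < K) q s k * (theta astar * p j).
    by rewrite -mulr_suml (qq_sum _ _ _ _ _ _ hB) mul1r.
  rewrite -sumrB /e mulr_suml; apply: eq_bigr => k _; lra.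
have hL : L = (\sum_(1 <= s < T.+1) e s * cdf_of p (T - s))%:E.
  rewrite /L (E_cum _ _ _ _ _ _ _ hB') (E_cum _ _ _ _ _ _ _ hB) -EFinB; congr (_%:E).
  rewrite -exch_cdf -sumrB; apply: eq_big_nat => t _.
  rewrite -sumrB; apply: eq_big_nat => s /andP[s1 _].
  by rewrite hX' // hX.
have hR : (\sum_(1 <= s < T.+1)
     'E_P[fun w => (theta astar - theta (A s w))%R] * (cdf_of p (T - s))%:E)%E
     = (\sum_(1 <= s < T.+1) e s * cdf_of p (T - s))%:E.
  rewrite -sumEFin; apply: eq_bigr => s _.
  by rewrite (E_gap _ _ _ _ _ _ _ _ hB hstar) -EFinM.
have hG : G = (\sum_(1 <= s < T.+1) e s)%:E.
  rewrite /G.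
  have -> : (\sum_(k < K) (theta astar - theta k)%:E * 'E_P[Npulls A k T])%E =
     (\sum_(k < K) ((theta astar - theta k) * \sum_(1 <= s < T.+1) q s k)%:E)%E.
    by apply: eq_bigr => k _; rewrite (E_N _ _ _ _ _ _ _ _ hB) -EFinM.
  rewrite sumEFin; congr (_%:E).
  rewrite /e exchange_big /=; apply: eq_bigr => k _; exact: mulr_sumr.
split.
- by rewrite hL hR.
- rewrite hL hG lee_fin; apply: ler_sum => s _.
  by apply: ler_piMr; [exact: e0 | exact: (cdfo_le1 p _ hpmf)].
move=> hm.
have m0 : (0 <= mean_of p)%E.
  by apply: nneseries_ge0 => n _ _; rewrite lee_fin mulr_ge0.
have hfin : mean_of p = (fine (mean_of p))%:E.
  by rewrite fineK // ge0_fin_numE.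
rewrite hL hG hfin -EFinB -EFinM lee_fin -sumrB.
apply: (@le_trans _ _ (\sum_(1 <= s < T.+1) \sum_(k < K)
     (theta astar - theta k) * (1 - cdf_of p (T - s)))).
  apply: ler_sum => s _.
  rewrite /e -[X in X - _]mulr1 -mulrBr mulr_suml; apply: ler_sum => k _.
  rewrite -mulrA ler_wpM2l ?subr_ge0 // ler_piMl ?qq_le1 ?subr_ge0 ?cdfo_le1 //.
  exact: (qq_le1 _ _ _ _ _ _ _ _ hB).
rewrite exchange_big /= mulr_sumr; apply: ler_sum => k _.
rewrite -mulr_sumr mulrC ler_wpM2r ?subr_ge0 //.
by rewrite (rev_sum (fun j => 1 - cdf_of p j)) tail_sum_le_mean.
Qed.
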